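(* Let $\mathfrak{g}$ be a $d$-dimensional real Lie algebra and let $\star$ be a star-product on $\mathfrak{g}^{*}$ (in the sense described in the context) satisfying property (P1). For $n\in\mathbb{N}$ let $\mathcal{B}_n=\{p_1,p_2,\ldots,p_{n_d}\}$ be a basis of $\sum_{j=0}^{n}S^j(\mathfrak{g})$ (the polynomials on $\mathfrak{g}^*$ of degree $\le n$) consisting of monomials in $X^1,\ldots,X^d$, ordered by decreasing degree, where $n_d=\dim\sum_{j=0}^n S^j(\mathfrak{g})$. For a monomial $p=X^{i_1}X^{i_2}\cdots X^{i_m}$ put $p^{\star}=X^{i_1}\star X^{i_2}\star\cdots\star X^{i_m}$. Then $\mathcal{B}^{*}_n=\{p_1^{\star},\ldots,p_{n_d}^{\star}\}$ is a spanning set for $\big(\sum_{j=0}^n S^j(\mathfrak{g})\big)[[\epsilon]]$ over $\mathbb{R}[[\epsilon]]$.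
   Context: $\mathfrak{g}$ has basis $X^1,\ldots,X^d$ with structure constants $[X^i,X^j]=c_k^{ij}X^k$ (summation convention); the $X^i$ are simultaneously regarded as linear coordinate functions on $\mathfrak{g}^*\cong\mathbb{R}^d$, so $S(\mathfrak{g})$ is the algebra of polynomial functions on $\mathfrak{g}^*$. The linear Poisson bracket is $\{a,b\}=c_k^{ij}X^k\,\partial_i a\,\partial_j b$. A star-product (deformation quantization) on $\mathfrak{g}^*$ is an $\mathbb{R}[[\epsilon]]$-bilinear product on $C^\infty(\mathfrak{g}^* )[[\epsilon]]$ given by $a\star b=\sum_{j\ge0}\epsilon^j\Pi_j(a,b)$ with $\Pi_j$ bi-differential operators, which is associative, has $\Pi_0(a,b)=ab$, and $\Pi_1(a,b)-\Pi_1(b,a)=\{a,b\}$; polynomials and operators may have coefficients in $\mathbb{R}[[\epsilon]]$. Property (P1): for any polynomials $p_n,q_m$ on $\mathfrak{g}^*$ of degrees $n$ and $m$, $p_n\star q_m=p_nq_m+r_{m+n-1}$ where $r_{m+n-1}$ is a polynomial of degree at most $m+n-1$. *)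

(* Defs.v *)
From HB Require Import structures.
From mathcomp Require Import all_boot all_order all_algebra.
From mathcomp Require Import reals derive.
From mathcomp Require Import mpoly.
From mathcomp Require normed_module.

Set Implicit Arguments.
Unset Strict Implicit.
Unset Printing Implicit Defensive.
Import Order.TTheory GRing.Theory Num.Theory.
Import normed_module.numFieldNormedType.Exports.
Local Open Scope ring_scope.

(* Points of g^* = R^d, written in the linear coordinates X^1..X^d. *)
Definition pt (R : realType) (d : nat) := 'I_d -> R.

Definition upd (R : realType) (d : nat) (x : pt R d) (i : 'I_d) (t : R) : pt R d :=
  fun j => if j == i then t else x j.

Definition partial (R : realType) (d : nat) (i : 'I_d) (f : pt R d -> R) : pt R d -> R :=
  fun x => derive1 (fun t => f (upd x i t)) (x i).

Definition iter_partial (R : realType) (d : nat) (s : seq 'I_d) (f : pt R d -> R)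
  : pt R d -> R := foldr (@partial R d) f s.

Definition pcont (R : realType) (d : nat) (f : pt R d -> R) : Prop :=
  forall (x : pt R d) (e : R), 0 < e -> exists2 del : R, 0 < del &
    forall y : pt R d, (forall i, `|y i - x i| < del) -> `|f y - f x| < e.

Definition smooth (R : realType) (d : nat) (f : pt R d -> R) : Prop :=
  forall s : seq 'I_d, pcont (iter_partial s f) /\
    forall (i : 'I_d) (x : pt R d),
      derivable (fun t => iter_partial s f (upd x i t)) (x i) 1.

Definition bidiff (R : realType) (d : nat)
  (P : (pt R d -> R) -> (pt R d -> R) -> (pt R d -> R)) : Prop :=
  exists (N : nat) (c : 'I_N -> pt R d -> R) (s t : 'I_N -> seq 'I_d),
    (forall k, smooth (c k)) /\
    forall a b, smooth a -> smooth b ->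
      P a b = fun x => \sum_(k < N) c k x * iter_partial (s k) a x
                                          * iter_partial (t k) b x.

(* elements of C^infty on g^* [[eps]] : sequence of eps-coefficients *)
Definition series (R : realType) (d : nat) := nat -> pt R d -> R.

(* a * b = sum_j eps^j Pi_j(a,b), extended R[[eps]]-bilinearly *)
Definition star (R : realType) (d : nat)
  (Pi : nat -> (pt R d -> R) -> (pt R d -> R) -> (pt R d -> R))
  (a b : series R d) : series R d :=
  fun k x => \sum_(j < k.+1) \sum_(i < (k - j).+1) Pi j (a i) (b (k - j - i)%N) x.

Definition poisson (R : realType) (d : nat) (c : 'I_d -> 'I_d -> 'I_d -> R)
  (a b : pt R d -> R) : pt R d -> R :=
  fun x => \sum_(i < d) \sum_(j < d) \sum_(k < d)
             c k i j * x k * partial i a x * partial j b x.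

(* c k i j = c_k^{ij}, structure constants of a Lie algebra:
   [X^i, X^j] = c_k^{ij} X^k is antisymmetric and satisfies Jacobi *)
Definition lie_struct (R : realType) (d : nat) (c : 'I_d -> 'I_d -> 'I_d -> R) : Prop :=
  (forall i j k, c k i j = - c k j i) /\
  (forall i j m l, \sum_(k < d) (c k i j * c l k m + c k j m * c l k i
                                 + c k m i * c l k j) = 0).

Definition is_star_product (R : realType) (d : nat) (c : 'I_d -> 'I_d -> 'I_d -> R)
  (Pi : nat -> (pt R d -> R) -> (pt R d -> R) -> (pt R d -> R)) : Prop :=
  [/\ (forall j, bidiff (Pi j)),
      (forall a b, smooth a -> smooth b -> Pi 0%N a b = fun x => a x * b x),
      (forall a b, smooth a -> smooth b ->
         (fun x => Pi 1%N a b x - Pi 1%N b a x) = poisson c a b) &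
      (forall a b e : series R d,
         (forall k, smooth (a k)) -> (forall k, smooth (b k)) ->
         (forall k, smooth (e k)) ->
         star Pi (star Pi a b) e = star Pi a (star Pi b e))].

(* polynomials on g^* with coefficients in R[[eps]]: eps-sequences of
   real polynomials *)
Definition pseries (R : realType) (d : nat) := nat -> mpoly.mpoly d R.

Definition embP (R : realType) (d : nat) (P : pseries R d) : series R d :=
  fun k x => mpoly.meval x (P k).

(* msize p = 1 + total degree of p (0 if p = 0) *)
Definition msz (R : realType) (d : nat) (p : mpoly.mpoly d R) : nat :=
  msize p.

Definition deg_le (R : realType) (d : nat) (P : pseries R d) (n : nat) : Prop :=
  forall k, (msz (P k) <= n.+1)%N.

Definition deg_eq (R : realType) (d : nat) (P : pseries R d) (n : nat) : Prop :=
  deg_le P n /\ exists k, msz (P k) = n.+1.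

Definition mulPS (R : realType) (d : nat) (P Q : pseries R d) : pseries R d :=
  fun k => \sum_(i < k.+1) P i * Q (k - i)%N.

(* Property (P1): p_n * q_m = p_n q_m + r_{m+n-1}, deg r <= m+n-1
   (i.e. msize r <= m+n) *)
Definition P1 (R : realType) (d : nat)
  (Pi : nat -> (pt R d -> R) -> (pt R d -> R) -> (pt R d -> R)) : Prop :=
  forall (n m : nat) (P Q : pseries R d), deg_eq P n -> deg_eq Q m ->
    exists r : pseries R d, (forall k, (msz (r k) <= n + m)%N) /\
      star Pi (embP P) (embP Q) = embP (fun k => mulPS P Q k + r k).

Definition Xs (R : realType) (d : nat) (i : 'I_d) : series R d :=
  fun k x => if k == 0%N then x i else 0.
Definition one (R : realType) (d : nat) : series R d :=
  fun k x => if k == 0%N then 1 else 0.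

(* p^star = X^{i1} * X^{i2} * ... * X^{im} for the word [:: i1; ...; im];
   the empty word (p = 1) gives 1 *)
Fixpoint wordstar (R : realType) (d : nat)
  (Pi : nat -> (pt R d -> R) -> (pt R d -> R) -> (pt R d -> R))
  (w : seq 'I_d) : series R d :=
  match w with
  | [::] => @one R d
  | [:: i] => @Xs R d i
  | i :: w' => star Pi (@Xs R d i) (wordstar Pi w')
  end.

Definition smulS (R : realType) (d : nat) (lam : nat -> R) (a : series R d)
  : series R d :=
  fun k x => \sum_(i < k.+1) lam i * a (k - i)%N x.

(* Main.v *)
Require Import Defs.
From HB Require Import structures.
From mathcomp Require Import all_boot all_order all_algebra.
From mathcomp Require Import reals derive.
From mathcomp Require Import mpoly.
From mathcomp Require normed_module boolp.
Import normed_module.numFieldNormedType.Exports.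
From Stdlib Require Import FunctionalExtensionality.
Set Implicit Arguments.
Unset Strict Implicit.
Unset Printing Implicit Defensive.
Import Order.TTheory GRing.Theory Num.Theory.
Local Open Scope ring_scope.

Lemma msize_le_coef (R : ringType) n (p : {mpoly R[n]}) s :
  (forall m, (s <= mdeg m)%N -> p@_m = 0) -> (msize p <= s)%N.
Proof.
move=> Hc; rewrite msizeE; apply/bigmax_leqP_seq => m Hm _.
rewrite ltnNge; apply/negP => H; move: Hm.
by rewrite mcoeff_msupp (Hc m H) eqxx.
Qed.

Lemma msize_coef0 (R : ringType) n (p : {mpoly R[n]}) s m :
  (msize p <= s)%N -> (s <= mdeg m)%N -> p@_m = 0.
Proof.
move=> H1 H2; apply/eqP; rewrite mcoeff_eq0; apply: msize_mdeg_ge.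
exact: leq_trans H2.
Qed.

Lemma msize_addl (R : ringType) n (p q : {mpoly R[n]}) :
  (msize q < msize p)%N -> msize (p + q) = msize p.
Proof.
move=> H; apply/eqP; rewrite eqn_leq; apply/andP; split.
  by apply: leq_trans (msizeD_le _ _) _; rewrite geq_max leqnn ltnW.
have E : p = (p + q) + - q by rewrite addrK.
have := msizeD_le (p + q) (- q); rewrite -E msizeN leq_max.
by case/orP => // H'; move: (leq_trans H H'); rewrite ltnn.
Qed.

Lemma msize_sum_le (R : ringType) n (I : Type) (r : seq I) (P : pred I)
  (F : I -> {mpoly R[n]}) s :
  (forall i, P i -> (msize (F i) <= s)%N) -> (msize (\sum_(i <- r | P i) F i) <= s)%N.
Proof.
move=> H; apply: (big_ind (fun p => (msize p <= s)%N)) => //.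
- by rewrite msize0.
- move=> x y Hx Hy; apply: leq_trans (msizeD_le _ _) _; by rewrite geq_max Hx Hy.
Qed.

Definition EP (R : realType) d (p : {mpoly R[d]}) : pseries R d :=
  fun k => if k == 0%N then p else 0.

Definition pw (R : realType) d (w : seq 'I_d) : {mpoly R[d]} :=
  \prod_(i <- w) mpolyX R (mnm1 i).

Lemma msize_pw (R : realType) d (w : seq 'I_d) : msize (pw R w) = (size w).+1.
Proof.
elim: w => [|i w IH]; first by rewrite /pw big_nil msize1.
rewrite /pw big_cons -/(pw R w) msizeM.
- by rewrite msizeX mdeg1 IH.
- by rewrite -msize_poly_eq0 msizeX.
- by rewrite -msize_poly_eq0 IH.
Qed.

Lemma embP_EX (R : realType) d (i : 'I_d) :
  Xs i = embP (fun k => EP (mpolyX R (mnm1 i)) k + 0).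
Proof.
apply: functional_extensionality => k; apply: functional_extensionality => x.
rewrite /Xs /embP /EP addr0; case: (k == 0%N) => /=; last by rewrite meval0.
by rewrite mevalXU.
Qed.

Lemma word (R : realType) d
  (Pi : nat -> (pt R d -> R) -> (pt R d -> R) -> (pt R d -> R)) :
  P1 Pi -> forall w : seq 'I_d, exists Q : pseries R d,
    (forall k, (msize (Q k) <= size w)%N) /\
    wordstar Pi w = embP (fun k => EP (pw R w) k + Q k).
Proof.
move=> HP1; elim=> [|i w IH].
  exists (fun _ => 0); split=> [k|]; first by rewrite msize0.
  rewrite /=; apply: functional_extensionality => k; apply: functional_extensionality => x.
  rewrite /Defs.one /embP /EP /pw big_nil addr0; case: (k == 0%N) => /=.
    by rewrite meval1.
  by rewrite meval0.
case: w IH => [|j w] IH.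
  exists (fun _ => 0); split=> [k|]; first by rewrite msize0.
  rewrite /= /pw big_cons big_nil mulr1; exact: embP_EX.
have [Q' [HQ' HW]] := IH.
set P' := (fun k => EP (pw R (j :: w)) k + Q' k) in HW.
have hdX : deg_eq (EP (mpolyX R (mnm1 i))) 1.
  split; last by exists 0%N; rewrite /msz /EP /= msizeX mdeg1.
  by move=> [|k]; rewrite /msz /EP /= ?msizeX ?mdeg1 ?msize0.
have hdP : deg_eq P' (size (j :: w)).
  split.
    move=> k; rewrite /msz /P'; apply: leq_trans (msizeD_le _ _) _.
    rewrite geq_max; apply/andP; split; last by apply: leq_trans (HQ' k) _.
    by case: k => [|k]; rewrite /EP /= ?msize_pw ?msize0.
  exists 0%N; rewrite /msz /P' /EP /= msize_addl msize_pw //.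
  by rewrite ltnS (HQ' 0%N).
have [r [Hr Hst]] := HP1 _ _ _ _ hdX hdP.
exists (fun k => mpolyX R (mnm1 i) * Q' k + r k); split.
  move=> k; apply: leq_trans (msizeD_le _ _) _; rewrite geq_max; apply/andP; split.
    have [->|nz] := eqVneq (Q' k) 0; first by rewrite mulr0 msize0.
    rewrite msizeM ?msizeX ?mdeg1 //; last by rewrite -msize_poly_eq0 msizeX.
    by rewrite add2n /=; apply: HQ'.
  by apply: leq_trans (Hr k) _.
rewrite [wordstar _ _]/= -/(wordstar Pi (j :: w)) HW (embP_EX R i).
have -> : (fun k => EP (mpolyX R (mnm1 i)) k + 0) = EP (mpolyX R (mnm1 i)).
  by apply: functional_extensionality => k; rewrite addr0.
rewrite Hst; congr embP; apply: functional_extensionality => k.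
rewrite /mulPS big_ord_recl /= subn0 big1 ?addr0; last first.
  by move=> l _; rewrite /EP /= mul0r.
rewrite /P' /EP /= mulrDr addrA; congr (_ + _); congr (_ + _).
case: (k == 0%N) => /=; last by rewrite mulr0.
by rewrite /pw [in RHS]big_cons.
Qed.

Definition conv (R : realType) d (lam : nat -> R) (P : pseries R d) : pseries R d :=
  fun k => \sum_(i < k.+1) lam i *: P (k - i)%N.

Lemma conv0 (R : realType) d (P : pseries R d) k : conv (fun _ => 0) P k = 0.
Proof. by rewrite /conv big1 // => i _; rewrite scale0r. Qed.

Lemma convD (R : realType) d l1 l2 (P : pseries R d) k :
  conv (fun i => l1 i + l2 i) P k = conv l1 P k + conv l2 P k.
Proof. by rewrite /conv -big_split /=; apply: eq_bigr => i _; rewrite scalerDl. Qed.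

Lemma convE (R : realType) d l (p : {mpoly R[d]}) (Q : pseries R d) k :
  conv l (fun j => EP p j + Q j) k = l k *: p + conv l Q k.
Proof.
rewrite /conv; under eq_bigr => i _ do rewrite scalerDr.
rewrite big_split /=; congr (_ + _).
rewrite big_ord_recr /= subnn /EP /= big1 ?add0r // => i _.
by rewrite subn_eq0 leqNgt ltn_ord /= scaler0.
Qed.

Lemma span_lem (R : realType) d n (Pm : mpoly.bmultinom d n.+1 -> pseries R d)
  (Q : mpoly.bmultinom d n.+1 -> pseries R d) :
  (forall m k, Pm m k = EP (mpolyX R (bmnm m)) k + Q m k) ->
  (forall m k, (msize (Q m k) <= mdeg (bmnm m))%N) ->
  forall s, (s <= n.+1)%N -> forall F : pseries R d, (forall k, (msize (F k) <= s)%N) ->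
  exists lam : mpoly.bmultinom d n.+1 -> nat -> R,
    forall k, F k = \sum_m conv (lam m) (Pm m) k.
Proof.
move=> HP HQ; elim=> [|s IH] hs F HF.
  exists (fun _ _ => 0) => k.
  have /eqP -> : F k == 0 by rewrite -msize_poly_eq0 -leqn0 HF.
  by rewrite big1 // => m _; rewrite conv0.
pose lam1 (m : mpoly.bmultinom d n.+1) (k : nat) := if mdeg (bmnm m) == s then (F k)@_(bmnm m) else 0.
pose G k := F k - \sum_m conv (lam1 m) (Pm m) k.
have HG : forall k, (msize (G k) <= s)%N.
  move=> k.
  have -> : G k = (F k - \sum_m lam1 m k *: mpolyX R (bmnm m))
                  - \sum_m conv (lam1 m) (Q m) k.
    have HPm : forall m, Pm m = fun j => EP 'X_[bmnm m] j + Q m j.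
      by move=> m; apply: functional_extensionality => j; rewrite HP.
    rewrite /G; under eq_bigr => m _ do rewrite HPm convE.
    by rewrite big_split /= opprD addrA.
  apply: leq_trans (msizeD_le _ _) _; rewrite msizeN geq_max; apply/andP; split.
    apply: msize_le_coef => mu hmu.
    rewrite mcoeffB raddf_sum /=.
    under eq_bigr => m _ do rewrite mcoeffZ mcoeffX.
    have [hmus|hmus] := eqVneq (mdeg mu) s.
      have hb : (mdeg mu < n.+1)%N by rewrite hmus.
      rewrite (bigD1 (BMultinom hb)) //= eqxx mulr1 /lam1 /= hmus eqxx.
      rewrite big1 ?addr0 ?subrr // => m hm.
      case: (bmnm m =P mu) => [e|_]; last by rewrite mulr0.
      by move: hm; rewrite -(inj_eq val_inj) /= e eqxx.
    rewrite (msize_coef0 (HF k)); last by rewrite ltn_neqAle eq_sym hmus hmu.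
    rewrite big1 ?subrr // => m _.
    rewrite /lam1; case: (mdeg m =P s) => e; last by rewrite mul0r.
    case: (bmnm m =P mu) => [e'|_]; last by rewrite mulr0.
    by move: hmus; rewrite -e' e eqxx.
  apply: msize_sum_le => m _; rewrite /conv; apply: msize_sum_le => i _.
  rewrite /lam1; case: eqP => [e|_]; last by rewrite scale0r msize0.
  by apply: leq_trans (msizeZ_le _ _) _; rewrite -e HQ.
have [lam2 Hl2] := IH (ltnW hs) G HG.
exists (fun m i => lam1 m i + lam2 m i) => k.
under eq_bigr => m _ do rewrite convD.
by rewrite big_split /= -Hl2 /G addrC subrK.
Qed.

Lemma smulS_embP (R : realType) d lam (P : pseries R d) k x :
  smulS lam (embP P) k x = meval x (conv lam P k).
Proof.
rewrite /smulS /embP /conv raddf_sum /=; apply: eq_bigr => i _.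
by rewrite mevalZ.
Qed.

Unset Implicit Arguments.
Set Strict Implicit.

Theorem lemma2p1p1 (R : realType) (d : nat) (c : 'I_d -> 'I_d -> 'I_d -> R)
  (Pi : nat -> (pt R d -> R) -> (pt R d -> R) -> (pt R d -> R)) :
  lie_struct c -> is_star_product c Pi -> P1 Pi ->
  forall (n : nat) (w : mpoly.bmultinom d n.+1 -> seq 'I_d),
    (forall m, \prod_(i <- w m) mpoly.mpolyX R (mpoly.mnm1 i)
                 = mpoly.mpolyX R (mpoly.bmnm m)) ->
    (forall m, exists P : pseries R d, deg_le P n /\ wordstar Pi (w m) = embP P) /\
    (forall F : pseries R d, deg_le F n ->
       exists lam : mpoly.bmultinom d n.+1 -> nat -> R,
         embP F = fun k x => \sum_(m : mpoly.bmultinom d n.+1)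
                               smulS (lam m) (wordstar Pi (w m)) k x).
Proof.
move=> _ _ HP1 n w hw.
have hpw : forall m, pw R (w m) = mpolyX R (bmnm m) by exact: hw.
have [Q HQ] := boolp.choice (fun m => word HP1 (w m)).
have hsz : forall m, size (w m) = mdeg (bmnm m).
  by move=> m; apply/eqP; rewrite -eqSS -(msize_pw R) hpw msizeX.
split.
  move=> m; exists (fun k => EP (pw R (w m)) k + Q m k); split; last by case: (HQ m).
  move=> k; rewrite /msz; apply: leq_trans (msizeD_le _ _) _; rewrite geq_max.
  have hb := bmdeg m.
  apply/andP; split.
    by case: k => [|k]; rewrite /EP /= ?msize0 // hpw msizeX.
  by case: (HQ m) => h _; apply: leq_trans (h k) _; rewrite hsz ltnW.
move=> F hF.
have [lam Hl] := @span_lem R d n (fun m k => EP (pw R (w m)) k + Q m k) Q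
  (fun m k => ltac:(by rewrite /= hpw))
  (fun m k => ltac:(by case: (HQ m) => h _; rewrite -hsz; apply: h))
  _ (leqnn n.+1) F hF.
exists lam; apply: functional_extensionality => k; apply: functional_extensionality => x.
under eq_bigr => m _ do rewrite (proj2 (HQ m)) smulS_embP.
by rewrite -raddf_sum /= -Hl.
Qed.
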